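(* Let $d\ge1$, $M>0$, and let $f:[0,1]^d\to\mathbb{R}$ satisfy $|f(x)-f(y)|\le M\|x-y\|_\infty$ for all $x,y\in[0,1]^d$; let $g(x)=f(x)\bmod 1$. Let $m>1$ be an integer, $x_i=\frac{i-1}{m-1}$ for $i\in[m]$, and for $\mathbf{i}=(i_1,\dots,i_d)\in[m]^d$ let $x_{\mathbf i}=(x_{i_1},\dots,x_{i_d})$. Let $\delta\in[0,1/2]$ and $\hat g:[0,1]^d\to[0,1)$ satisfy $d_w(\hat g(x_{\mathbf i}),g(x_{\mathbf i}))\le\delta$ for all $\mathbf i\in[m]^d$. For each $\mathbf i$ let $\eta_{\mathbf i}\in[-\delta,\delta]$ be such that $\hat g(x_{\mathbf i})=(f(x_{\mathbf i})+\eta_{\mathbf i})\bmod 1$, and set $\hat f(x_{\mathbf i}):=f(x_{\mathbf i})+\eta_{\mathbf i}$. If $2\delta+\frac{M}{m-1}<\frac12$, then for each $j\in[d]$ and each $\mathbf i\in[m]^d$ with $i_j>1$, $$D_j\hat f(x_{\mathbf i})=\begin{cases}D_j\hat g(x_{\mathbf i}) & \text{if } |D_j\hat g(x_{\mathbf i})|<1/2,\\ 1+D_j\hat g(x_{\mathbf i}) & \text{if } D_j\hat g(x_{\mathbf i})<-1/2,\\ -1+D_j\hat g(x_{\mathbf i}) & \text{if } D_j\hat g(x_{\mathbf i})>1/2.\end{cases}$$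
   Context: For $a\in\mathbb{R}$, $a\bmod1=a-\lfloor a\rfloor\in[0,1)$. The wrap-around distance on $[0,1)$ is $d_w(a,b)=\min(|a-b|,1-|a-b|)$. $[m]=\{1,\dots,m\}$. For a function $h$ defined on the grid points and $\mathbf i\in[m]^d$ with $i_j>1$, the finite difference along coordinate $j$ is $D_jh(x_{\mathbf i})=h(x_{i_1},\dots,x_{i_j},\dots,x_{i_d})-h(x_{i_1},\dots,x_{i_j-1},\dots,x_{i_d})$. *)

(* Defs.v *)
From mathcomp Require Import all_boot all_order all_algebra.
From mathcomp Require Export reals.
Set Implicit Arguments. Unset Strict Implicit. Unset Printing Implicit Defensive.
Import Order.TTheory GRing.Theory Num.Theory.
Local Open Scope ring_scope.

Definition mod1 {R : realType} (a : R) : R := a - (Num.floor a)%:~R.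

Definition dw {R : realType} (a b : R) : R := Num.min `|a - b| (1 - `|a - b|).

Definition dinf {R : realType} {d : nat} (x y : 'I_d -> R) : R :=
  \big[Num.max/0]_(k < d) `|x k - y k|.

Definition in_cube {R : realType} {d : nat} (x : 'I_d -> R) : Prop :=
  forall k, 0 <= x k <= 1.

(* multi-indices in [m]^d, 1-based as in the paper *)
Definition in_grid {d : nat} (m : nat) (i : 'I_d -> nat) : Prop :=
  forall k, (1 <= i k <= m)%N.

Definition gridpt {R : realType} {d : nat} (m : nat) (i : 'I_d -> nat) : 'I_d -> R :=
  fun k => ((i k).-1)%:R / (m.-1)%:R.

Definition prev_idx {d : nat} (j : 'I_d) (i : 'I_d -> nat) : 'I_d -> nat :=
  fun k => if k == j then (i k).-1 else i k.

Definition Dj {R : realType} {d : nat} (j : 'I_d) (h : ('I_d -> nat) -> R)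
  (i : 'I_d -> nat) : R := h i - h (prev_idx j i).

(* Main.v *)
Require Import Defs.
From mathcomp Require Import all_boot all_order all_algebra.
From mathcomp Require Import reals.
From mathcomp Require Import ring lra zify.
Import Order.TTheory GRing.Theory Num.Theory.
Local Open Scope ring_scope.

Lemma grid_cube (R : realType) (d m : nat) (i : 'I_d -> nat) :
  (1 < m)%N -> in_grid m i -> in_cube (gridpt (R:=R) m i).
Proof.
move=> hm hi k; rewrite /gridpt.
have hm0 : (0 : R) < (m.-1)%:R by rewrite ltr0n; lia.
apply/andP; split; first by apply: divr_ge0.
rewrite ler_pdivrMr // mul1r ler_nat.
have := hi k; lia.
Qed.

Theorem mainTheorem3 (R : realType) (d : nat) (M : R)
  (f : ('I_d -> R) -> R) (m : nat) (delta : R)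
  (ghat : ('I_d -> R) -> R) (eta : ('I_d -> nat) -> R) :
  (1 <= d)%N ->
  0 < M ->
  (forall x y, in_cube x -> in_cube y -> `|f x - f y| <= M * dinf x y) ->
  (1 < m)%N ->
  0 <= delta <= 1 / 2 ->
  (forall x, in_cube x -> 0 <= ghat x < 1) ->
  (forall i, in_grid m i ->
     dw (ghat (gridpt m i)) (mod1 (f (gridpt m i))) <= delta) ->
  (forall i, in_grid m i ->
     - delta <= eta i <= delta /\
     ghat (gridpt m i) = mod1 (f (gridpt m i) + eta i)) ->
  2 * delta + M / (m.-1)%:R < 1 / 2 ->
  let fhat := fun i => f (gridpt m i) + eta i in
  let ghat_g := fun i => ghat (gridpt m i) in
  forall (j : 'I_d) (i : 'I_d -> nat), in_grid m i -> (1 < i j)%N ->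
    (`|Dj j ghat_g i| < 1 / 2 -> Dj j fhat i = Dj j ghat_g i) /\
    (Dj j ghat_g i < - (1 / 2) -> Dj j fhat i = 1 + Dj j ghat_g i) /\
    (1 / 2 < Dj j ghat_g i -> Dj j fhat i = - 1 + Dj j ghat_g i).
Proof.
move=> _ M0 Lip hm hdel hg _ heta hsmall fhat ghat_g j i hi hij.
set p := prev_idx j i.
have hp : in_grid m p.
  move=> k; rewrite /p /prev_idx; case: eqP => [->|_]; have := hi k; have := hi j; lia.
have hm0 : (0 : R) < (m.-1)%:R by rewrite ltr0n; lia.
have hdinf : dinf (gridpt (R:=R) m i) (gridpt m p) <= 1 / (m.-1)%:R.
  rewrite /dinf; apply: (big_ind (fun x : R => x <= 1 / (m.-1)%:R)).
  - by apply: divr_ge0.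
  - by move=> x y hx hy; rewrite ge_max hx hy.
  move=> k _; rewrite /gridpt /p /prev_idx; case: eqP => [->|_].
    rewrite -mulrBl normrM [`|_^-1|]ger0_norm; last by rewrite invr_ge0 ltW.
    rewrite mul1r; apply: ler_piMl; first by rewrite invr_ge0 ltW.
    have hij' := hi j.
    have -> : (i j).-1 = ((i j).-2).+1 by lia.
    by rewrite -natr1 addrC addKr normr1.
  by rewrite subrr normr0 divr_ge0.
have hL := Lip _ _ (@grid_cube R _ _ _ hm hi) (@grid_cube R _ _ _ hm hp).
have hL2 : `|f (gridpt m i) - f (gridpt m p)| <= M / (m.-1)%:R.
  apply: (le_trans hL).
  by rewrite ler_pM2l // -[_^-1]mul1r.
have [he1 hg1] := heta i hi.
have [he2 hg2] := heta p hp.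
have gi := hg _ (@grid_cube R _ _ _ hm hi).
have gp := hg _ (@grid_cube R _ _ _ hm hp).
set a := f (gridpt m i) + eta i in hg1.
set b := f (gridpt m p) + eta p in hg2.
set z : int := (Num.floor a - Num.floor b)%R.
have hD : Dj j fhat i = Dj j ghat_g i + z%:~R.
  rewrite /Dj /fhat /ghat_g -/p hg1 hg2 /mod1 /z intrB -/a -/b; ring.
have hF : `|Dj j fhat i| < 1 / 2.
  rewrite /Dj /fhat -/p.
  move: hL2 he1 he2 hsmall; set u := f _ - f _; set v := M / _.
  have -> : f (gridpt m i) + eta i - (f (gridpt m p) + eta p) = u + (eta i - eta p) by rewrite /u; ring.
  move=> hu he1' he2' hs; rewrite ltr_norml; move: hu; rewrite ler_norml => /andP[hu1 hu2].
  move: he1' he2' => /andP[h1 h2] /andP[h3 h4].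
  apply/andP; split; lra.
have hG : `|Dj j ghat_g i| < 1.
  rewrite /Dj /ghat_g -/p ltr_norml; move: gi gp => /andP[h1 h2] /andP[h3 h4].
  apply/andP; split; lra.
move: hF hG; rewrite hD; move: (Dj j ghat_g i) => G.
rewrite !ltr_norml => /andP[h1 h2] /andP[h3 h4].
split; [|split].
- move=> /andP[h5 h6].
  have k1 : (-1 < z)%R by rewrite -(ltr_int R) mulrNz; lra.
  have k2 : (z < 1)%R by rewrite -(ltr_int R); lra.
  have -> : z = 0 by clearbody z; move: k1 k2; clear; lia.
  by rewrite addr0.
- move=> h5.
  have k1 : (0 < z)%R by rewrite -(ltr_int R); lra.
  have k2 : (z < 2)%R by rewrite -(ltr_int R); lra.
  have -> : z = 1 by clearbody z; move: k1 k2; clear; lia.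
  by rewrite addrC.
- move=> h5.
  have k1 : (-2 < z)%R by rewrite -(ltr_int R) mulrNz; lra.
  have k2 : (z < 0)%R by rewrite -(ltr_int R); lra.
  have -> : z = -1 by clearbody z; move: k1 k2; clear; lia.
  by rewrite addrC.
Qed.
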